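(* Let $\{e_j\}_{j\in\mathbb N}$ be a complete orthonormal system in $L$, $L_0:=\operatorname{span}\{e_j: j\in\mathbb N\}$ (finite linear combinations), and let $B:L_0\to L$ be a linear operator. Put $d\Gamma_M(B):=\sum_{j=1}^M a^\dagger(Be_j)a(\bar e_j)$. If the operators $d\Gamma_M(B)$ converge strongly on all of $\mathcal F^{(1)}$ as $M\to\infty$, then $B$ is bounded on $L_0$, i.e. $\sup\{\|Bf\|: f\in L_0,\ \|f\|=1\}<\infty$.
   Context: $L$ is a separable complex Hilbert space with $\dim L=\infty$, scalar product antilinear in the first argument, and a conjugation $f\mapsto\bar f$ (antilinear involution with $(\bar f,\bar g)=(g,f)$). $\mathcal F$ carries a Fock representation of the CCR over $L$: on a dense invariant domain $D$ there are operators $a(f),a^\dagger(f)$, linear in $f$, with $[a(f),a(g)]=0=[a^\dagger(f),a^\dagger(g)]$, $[a(f),a^\dagger(g)]=(\bar f,g)\mathrm{id}$, $(a(f)\Phi,\Psi)=(\Phi,a^\dagger(\bar f)\Psi)$, a unit vacuum $\Omega$ with $a(f)\Omega=0$, and $\mathcal F$ is the closure of the span of all vectors $a^\dagger(f_n)\cdots a^\dagger(f_1)\Omega$. $\mathcal F^{(1)}$ is the closure of $\{a^\dagger(f)\Omega: f\in L\}$; $a(f),a^\dagger(f)$ extend to bounded operators from the closed $n$-particle space to the $(n\mp1)$-particle space, which are used. *)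

(* Defs.v *)
From HB Require Import structures.
From mathcomp Require Import all_boot all_order all_algebra.
From mathcomp Require Import reals.
From mathcomp Require Import complex.
Set Implicit Arguments. Unset Strict Implicit. Unset Printing Implicit Defensive.
Import Order.TTheory GRing.Theory Num.Theory.
Local Open Scope ring_scope.

Section Hilbert.
Variable R : realType.
Local Notation C := R[i].
Variable V : lmodType C.
Variable ip : V -> V -> C.   (* scalar product, antilinear in first argument *)

Definition is_scalar_product : Prop :=
  [/\ (forall x y1 y2 (c : C), ip x (c *: y1 + y2) = c * ip x y1 + ip x y2),
      (forall x y, ip y x = (ip x y)^*),
      (forall x, 0 <= ip x x) &
      (forall x, ip x x = 0 -> x = 0)].

Definition hnorm (x : V) : R := Num.sqrt (complex.Re (ip x x)).

Definition hcvg (u : nat -> V) (l : V) : Prop :=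
  forall eps : R, 0 < eps -> exists N : nat, forall n, (N <= n)%N ->
    hnorm (u n - l) < eps.

Definition hcauchy (u : nat -> V) : Prop :=
  forall eps : R, 0 < eps -> exists N : nat, forall n m, (N <= n)%N -> (N <= m)%N ->
    hnorm (u n - u m) < eps.

Definition is_hilbert : Prop :=
  is_scalar_product /\ forall u, hcauchy u -> exists l, hcvg u l.

Definition separable : Prop :=
  exists s : nat -> V, forall x (eps : R), 0 < eps -> exists n, hnorm (x - s n) < eps.

Definition in_span (P : V -> Prop) (x : V) : Prop :=
  exists (n : nat) (c : 'I_n -> C) (v : 'I_n -> V),
    (forall i, P (v i)) /\ x = \sum_(i < n) c i *: v i.

Definition in_closure (P : V -> Prop) (x : V) : Prop :=
  forall eps : R, 0 < eps -> exists y, P y /\ hnorm (x - y) < eps.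

Definition complete_orthonormal (e : nat -> V) : Prop :=
  (forall i j, ip (e i) (e j) = (i == j)%:R) /\
  (forall x, (forall j, ip (e j) x = 0) -> x = 0).

Definition is_conjugation (cj : V -> V) : Prop :=
  [/\ (forall (c : C) f g, cj (c *: f + g) = c^* *: cj f + cj g),
      (forall f, cj (cj f) = f) &
      (forall f g, ip (cj f) (cj g) = ip g f)].
End Hilbert.

Section Fock.
Variable R : realType.
Local Notation C := R[i].
Variables (L : lmodType C) (ipL : L -> L -> C) (cj : L -> L).
Variables (F : lmodType C) (ipF : F -> F -> C).
Variables (D : F -> Prop) (a ad : L -> F -> F) (Om : F).

(* a^dagger(f_n) ... a^dagger(f_1) Omega for s = [:: f_n; ...; f_1] *)
Definition fvec (s : seq L) : F := foldr ad Om s.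

Definition npart (n : nat) (x : F) : Prop :=
  in_closure ipF (in_span (fun y => exists s, size s = n /\ y = fvec s)) x.

Definition bounded_linear_on (P : F -> Prop) (T : F -> F) : Prop :=
  (forall (c : C) x y, P x -> P y -> T (c *: x + y) = c *: T x + T y) /\
  exists K : R, forall x, P x -> hnorm ipF (T x) <= K * hnorm ipF x.

Definition fock_representation : Prop :=
  (forall (c : C) x y, D x -> D y -> D (c *: x + y)) /\
  D Om /\
  (forall f x, D x -> D (a f x) /\ D (ad f x)) /\
  (forall x, in_closure ipF D x) /\
  (forall f (c : C) x y, D x -> D y ->
      a f (c *: x + y) = c *: a f x + a f y /\
      ad f (c *: x + y) = c *: ad f x + ad f y) /\
  (forall (c : C) f g x, D x ->
      a (c *: f + g) x = c *: a f x + a g x /\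
      ad (c *: f + g) x = c *: ad f x + ad g x) /\
  (forall f g x, D x ->
      a f (a g x) = a g (a f x) /\ ad f (ad g x) = ad g (ad f x) /\
      a f (ad g x) - ad g (a f x) = ipL (cj f) g *: x) /\
  (forall f x y, D x -> D y -> ipF (a f x) y = ipF x (ad (cj f) y)) /\
  ipF Om Om = 1 /\
  (forall f, a f Om = 0) /\
  (forall x, in_closure ipF (in_span (fun y => exists s, y = fvec s)) x) /\
  (forall f n,
     (forall x, npart n.+1 x -> npart n (a f x)) /\
     (forall x, npart n x -> npart n.+1 (ad f x)) /\
     bounded_linear_on (npart n) (a f) /\
     bounded_linear_on (npart n) (ad f)).

(* dGamma_M(B) = sum_{j=1}^M a^dagger(B e_j) a(conj e_j), indices shifted to 0..M-1 *)
Definition dGammaM (e : nat -> L) (B : L -> L) (M : nat) (x : F) : F :=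
  \sum_(j < M) ad (B (e j)) (a (cj (e j)) x).
End Fock.

Definition inL0 (R : realType) (L : lmodType R[i]) (e : nat -> L) (f : L) : Prop :=
  exists (n : nat) (c : 'I_n -> R[i]), f = \sum_(j < n) c j *: e j.

(* B : L0 -> L linear (B is given as a function on L; only values on L0 matter) *)
Definition linear_on_L0 (R : realType) (L : lmodType R[i]) (e : nat -> L) (B : L -> L) : Prop :=
  forall (c : R[i]) f g, inL0 e f -> inL0 e g -> B (c *: f + g) = c *: B f + B g.

(* Main.v *)
Require Import Defs.
From HB Require Import structures.
From mathcomp Require Import all_boot all_order all_algebra.
From mathcomp Require Import reals.
From mathcomp Require Import complex.
From mathcomp Require Import ring lra.
From Stdlib Require Import Classical_Prop ClassicalEpsilon.
Set Implicit Arguments. Unset Strict Implicit. Unset Printing Implicit Defensive.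
Import Order.TTheory GRing.Theory Num.Theory.
Local Open Scope ring_scope.

Section IP.
Variable R : realType.
Local Notation C := R[i].
Variable V : lmodType C.
Variable ip : V -> V -> C.
Hypothesis Hsp : is_scalar_product ip.

Lemma ipL1 x y1 y2 (c : C) : ip x (c *: y1 + y2) = c * ip x y1 + ip x y2.
Proof. by case: Hsp => H _ _ _; apply: H. Qed.
Lemma ipC x y : ip y x = (ip x y)^*.
Proof. by case: Hsp => _ H _ _; apply: H. Qed.
Lemma ip_ge0 x : 0 <= ip x x.
Proof. by case: Hsp => _ _ H _; apply: H. Qed.
Lemma ip_eq0 x : ip x x = 0 -> x = 0.
Proof. by case: Hsp => _ _ _ H; apply: H. Qed.

Lemma ip0r x : ip x 0 = 0.
Proof. have := ipL1 x 0 0 1; rewrite scale1r addr0 mul1r => H.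
by apply: (addrI (ip x 0)); rewrite addr0 -H. Qed.
Lemma ipDr x y z : ip x (y + z) = ip x y + ip x z.
Proof. by rewrite -[y]scale1r ipL1 mul1r scale1r. Qed.
Lemma ipZr x c y : ip x (c *: y) = c * ip x y.
Proof. by rewrite -[c *: y]addr0 ipL1 ip0r addr0. Qed.
Lemma ipNr x y : ip x (- y) = - ip x y.
Proof. by rewrite -scaleN1r ipZr mulN1r. Qed.
Lemma ipBr x y z : ip x (y - z) = ip x y - ip x z.
Proof. by rewrite ipDr ipNr. Qed.
Lemma ip0l x : ip 0 x = 0.
Proof. by rewrite ipC ip0r conjC0. Qed.
Lemma ipDl x y z : ip (y + z) x = ip y x + ip z x.
Proof. by rewrite [LHS]ipC ipDr rmorphD [ip y x]ipC [ip z x]ipC. Qed.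
Lemma ipZl x c y : ip (c *: y) x = c^* * ip y x.
Proof. by rewrite [LHS]ipC ipZr rmorphM [ip y x]ipC. Qed.
Lemma ipNl x y : ip (- y) x = - ip y x.
Proof. by rewrite [LHS]ipC ipNr rmorphN [ip y x]ipC. Qed.
Lemma ipBl x y z : ip (y - z) x = ip y x - ip z x.
Proof. by rewrite ipDl ipNl. Qed.
Lemma ip_sumr x n (f : 'I_n -> V) : ip x (\sum_(i < n) f i) = \sum_(i < n) ip x (f i).
Proof. elim/big_rec2: _ => [|i a b _ <-]; by rewrite ?ip0r ?ipDr. Qed.
Lemma ip_suml x n (f : 'I_n -> V) : ip (\sum_(i < n) f i) x = \sum_(i < n) ip (f i) x.
Proof. elim/big_rec2: _ => [|i a b _ <-]; by rewrite ?ip0l ?ipDl. Qed.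

Lemma ip_real x : real_complex R (complex.Re (ip x x)) = ip x x.
Proof.
have := ip_ge0 x; rewrite lecE /= => /andP[/eqP H _].
by case: (ip x x) H => a b /= ->.
Qed.
Lemma Re_ge0 x : 0 <= complex.Re (ip x x).
Proof. by have := ip_ge0 x; rewrite lecE /= => /andP[_ ->]. Qed.

Local Notation hn := (hnorm ip).
Lemma hn_ge0 x : 0 <= hn x.
Proof. exact: sqrtr_ge0. Qed.
Lemma hn_sqr x : real_complex R ((hn x) ^+ 2) = ip x x.
Proof. by rewrite /hnorm sqr_sqrtr ?Re_ge0 // ip_real. Qed.
Lemma hn0 : hn 0 = 0.
Proof. by rewrite /hnorm ip0r /= sqrtr0. Qed.


Lemma CS x y : `|ip x y| ^+ 2 <= ip x x * ip y y.
Proof.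
have [->|xn0] := eqVneq x 0; first by rewrite !ip0l normr0 expr0n mul0r.
set a := ip x x.
have a_gt0 : 0 < a.
  rewrite lt_def ip_ge0 andbT; apply/eqP => /ip_eq0; exact/eqP.
have := ip_ge0 (a *: y - ip x y *: x).
rewrite ipBl !ipBr !ipZl !ipZr [ip y x]ipC (conj_Creal (ger0_real (ip_ge0 x))) -/a.
set p := ip x y; set q := p^*; set Y := ip y y.
have -> : a * (a * Y) - a * (p * q) - (q * (a * p) - q * (p * a)) = a * (a * Y - p * q).
  ring.
by rewrite pmulr_rge0 // subr_ge0 normCK.
Qed.

Lemma rc_ge0 (r : R) : (0 <= real_complex R r) = (0 <= r).
Proof. by rewrite lecE /= eqxx. Qed.
Lemma rc_le (r s : R) : (real_complex R r <= real_complex R s) = (r <= s).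
Proof. by rewrite lecE /= eqxx. Qed.

Lemma rcD (r s : R) : real_complex R (r + s) = real_complex R r + real_complex R s.
Proof. exact: rmorphD. Qed.
Lemma rcM (r s : R) : real_complex R (r * s) = real_complex R r * real_complex R s.
Proof. exact: rmorphM. Qed.

Lemma rcX (r : R) : (real_complex R r) ^+ 2 = real_complex R (r ^+ 2).
Proof. by rewrite rmorphXn. Qed.

Lemma CSn x y : `|ip x y| <= real_complex R (hn x * hn y).
Proof.
rewrite -(ler_pXn2r (_ : 0 < 2)%N) ?nnegrE ?normr_ge0 ?rc_ge0 ?mulr_ge0 ?hn_ge0 //.
have -> : (real_complex R (hn x * hn y))^+2 =
   real_complex R (hn x ^+2) * real_complex R (hn y ^+2).
  by rewrite -!rmorphXn -rmorphM exprMn.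
by rewrite !hn_sqr CS.
Qed.

Lemma tri x y : hn (x + y) <= hn x + hn y.
Proof.
rewrite -(ler_pXn2r (_ : 0 < 2)%N) ?nnegrE ?addr_ge0 ?hn_ge0 //.
rewrite -rc_le hn_sqr sqrrD !rcD !hn_sqr ipDl !ipDr [ip y x]ipC.
set p := ip x y; set m := real_complex R _.
have -> : ip x x + p + (p^* + ip y y) = ip x x + (p + p^*) + ip y y by ring.
rewrite lerD2r lerD2l.
have pr : p + p^* \is Num.real.
  by apply/CrealP; rewrite rmorphD addrC; congr (_ + _); apply: conjCK.
apply: (le_trans (real_ler_norm pr)).
by rewrite (le_trans (ler_normD _ _)) // norm_conjC lerD ?CSn.
Qed.

Lemma hnZ c x : real_complex R (hn (c *: x)) = `|c| * real_complex R (hn x).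
Proof.
apply: (pexpIrn (_ : 0 < 2)%N); rewrite ?nnegrE ?mulr_ge0 ?normr_ge0 ?rc_ge0 ?hn_ge0 //=.
by rewrite exprMn normCK !rcX !hn_sqr ipZl ipZr mulrA [c * _]mulrC.
Qed.

Lemma hnN x : hn (- x) = hn x.
Proof.
apply/eqP; rewrite -(inj_eq (@complexI R)) -scaleN1r; apply/eqP.
by rewrite hnZ normrN normr1 mul1r.
Qed.
Lemma hnB x y : hn (x - y) = hn (y - x).
Proof. by rewrite -hnN opprB. Qed.
End IP.

Section ONB.
Variable R : realType.
Local Notation C := R[i].
Variable L : lmodType C.
Variable ip : L -> L -> C.
Hypothesis Hsp : is_scalar_product ip.
Variable e : nat -> L.
Hypothesis ON : forall i j, ip (e i) (e j) = (i == j)%:R.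
Local Notation hn := (hnorm ip).

Definition Pr (N : nat) (x : L) : L := \sum_(j < N) ip (e j) x *: e j.

Lemma ip_e_Pr j N x : ip (e j) (Pr N x) = if (j < N)%N then ip (e j) x else 0.
Proof.
elim: N => [|N IH]; first by rewrite /Pr big_ord0 (ip0r Hsp).
rewrite /Pr big_ord_recr /= (ipDr Hsp) -/(Pr N x) IH (ipZr Hsp) ON ltnS.
case: (ltngtP j N) => [jN|jN|->]; rewrite ?eqxx ?mulr1 ?addr0 /=. all: by rewrite ?mulr0 ?addr0 ?add0r.


Qed.

Lemma ip_e_sum n (c : 'I_n -> C) (j : 'I_n) : ip (e j) (\sum_(i < n) c i *: e i) = c j.
Proof.
rewrite (ip_sumr Hsp) (bigD1 j) //= (ipZr Hsp) ON eqxx mulr1 big1 ?addr0 // => i ij.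
have /negbTE nij : (j : nat) != i by rewrite eq_sym.
by rewrite (ipZr Hsp) ON nij mulr0.
Qed.

Lemma PrD N x y : Pr N (x + y) = Pr N x + Pr N y.
Proof. by rewrite /Pr -big_split; apply: eq_bigr => i _; rewrite (ipDr Hsp) scalerDl. Qed.
Lemma PrZ N c x : Pr N (c *: x) = c *: Pr N x.
Proof. by rewrite /Pr scaler_sumr; apply: eq_bigr => i _; rewrite (ipZr Hsp) scalerA. Qed.
Lemma PrN N x : Pr N (- x) = - Pr N x.
Proof. by rewrite -scaleN1r PrZ scaleN1r. Qed.
Lemma PrB N x y : Pr N (x - y) = Pr N x - Pr N y.
Proof. by rewrite PrD PrN. Qed.

Lemma Pr_ext N M y : (forall j, (N <= j)%N -> ip (e j) y = 0) -> (N <= M)%N ->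
  Pr M y = Pr N y.
Proof.
move=> H; elim: M => [|M IH]; first by rewrite leqn0 => /eqP->.
rewrite leq_eqVlt => /orP[/eqP<-//|]; rewrite ltnS => NM.
by rewrite /Pr big_ord_recr /= H // scale0r addr0 -/(Pr M y) IH.
Qed.

Lemma Pr_mono N M y : Pr N y = y -> (N <= M)%N -> Pr M y = y.
Proof.
move=> Hy NM; rewrite (@Pr_ext N) // => j Nj.
by rewrite -Hy ip_e_Pr ltnNge Nj.
Qed.

Lemma PrPr N M x : (N <= M)%N -> Pr M (Pr N x) = Pr N x.
Proof.
move=> NM; rewrite (@Pr_ext N) //; last by move=> j Nj; rewrite ip_e_Pr ltnNge Nj.
by rewrite /Pr; apply: eq_bigr => j _; rewrite ip_e_Pr ltn_ord.
Qed.

Lemma fixed_inL0 N x : Pr N x = x -> inL0 e x.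
Proof. by move=> H; exists N, (fun j : 'I_N => ip (e j) x); rewrite -{1}H. Qed.

Lemma inL0_Pr N x : inL0 e (Pr N x).
Proof. by exists N, (fun j : 'I_N => ip (e j) x). Qed.

Lemma inL0_fix x : inL0 e x -> exists N, Pr N x = x.
Proof.
case=> n [c ->]; exists n; rewrite /Pr; apply: eq_bigr => j _.
by rewrite ip_e_sum.
Qed.

Lemma hn_e j : hn (e j) = 1.
Proof. by rewrite /hnorm ON eqxx /= sqrtr1. Qed.

Lemma inL0_e j : inL0 e (e j).
Proof.
apply: (@fixed_inL0 j.+1).
rewrite /Pr big_ord_recr /= ON eqxx scale1r big1 ?add0r // => i _.
by rewrite ON ltn_eqF ?scale0r.
Qed.

Lemma pyth x y : ip x y = 0 -> ip (x + y) (x + y) = ip x x + ip y y.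
Proof.
move=> h; rewrite (ipDl Hsp) !(ipDr Hsp) h [ip y x](ipC Hsp) h.
by rewrite conjC0 addr0 add0r.
Qed.

End ONB.

Section BSec.
Variable R : realType.
Local Notation C := R[i].
Variable L : lmodType C.
Variable ip : L -> L -> C.
Hypothesis Hsp : is_scalar_product ip.
Variable e : nat -> L.
Hypothesis ON : forall i j, ip (e i) (e j) = (i == j)%:R.
Variable B : L -> L.
Hypothesis Blin : linear_on_L0 e B.
Local Notation hn := (hnorm ip).
Local Notation PR := (Pr ip e).

Lemma inL0_0 : inL0 e 0.
Proof. by exists 0%N, (fun _ => 0); rewrite big_ord0. Qed.

Lemma inL0_lin c x y : inL0 e x -> inL0 e y -> inL0 e (c *: x + y).
Proof.
move=> /(inL0_fix Hsp ON) [N1 H1] /(inL0_fix Hsp ON) [N2 H2].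
apply: (@fixed_inL0 _ _ ip e (maxn N1 N2)).
rewrite (PrD Hsp) (PrZ Hsp) (Pr_mono Hsp ON H1) ?leq_maxl //.
by rewrite (Pr_mono Hsp ON H2) ?leq_maxr.
Qed.

Lemma B0 : B 0 = 0.
Proof.
have := Blin (-1) inL0_0 inL0_0; rewrite scaler0 addr0 scaleN1r => H.
by rewrite {1}H addNr.
Qed.
Lemma BD x y : inL0 e x -> inL0 e y -> B (x + y) = B x + B y.
Proof. by move=> hx hy; rewrite -[x in LHS]scale1r Blin // scale1r. Qed.
Lemma BZ c x : inL0 e x -> B (c *: x) = c *: B x.
Proof.
move=> hx; rewrite -[_ *: x]addr0 Blin //; last exact: inL0_0.
by have -> : B 0 = 0 := B0; rewrite addr0.
Qed.
Lemma BB x y : inL0 e x -> inL0 e y -> B (x - y) = B x - B y.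
Proof.
by move=> hx hy; rewrite addrC -scaleN1r Blin // scaleN1r addrC.
Qed.

Lemma inL0_Ze c j : inL0 e (c *: e j).
Proof. by rewrite -[_ *: e j]addr0; apply: inL0_lin; [apply: (inL0_e ON)|apply: inL0_0]. Qed.

Lemma B_Pr N x : B (PR N x) = \sum_(j < N) ip (e j) x *: B (e j).
Proof.
elim: N => [|N IH]; first by rewrite /Pr !big_ord0; have -> : B 0 = 0 := B0.
have h1 := inL0_Pr ip e N x; have h2 := inL0_Ze (ip (e N) x) N.
have h3 := inL0_e ON N.
rewrite /Pr big_ord_recr /= -/(PR N x) BD // BZ // IH.
by rewrite big_ord_recr.
Qed.

Lemma hn_sum_le n (f : 'I_n -> L) : hn (\sum_(i < n) f i) <= \sum_(i < n) hn (f i).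
Proof.
elim/big_rec2: _ => [|i a b _ IH]; first by rewrite hn0 ?lexx.
by apply: (le_trans (tri Hsp _ _)); rewrite lerD2l.
Qed.

Lemma hnZle (c : C) x : `|c| <= 1 -> hn (c *: x) <= hn x.
Proof.
move=> c1; rewrite -rc_le (hnZ Hsp) ler_piMl // rc_ge0; exact: hn_ge0.
Qed.

Lemma hn_rscale (d : R) x : 0 <= d -> hn (real_complex R d *: x) = d * hn x.
Proof.
move=> d0; apply: (@complexI R); rewrite (hnZ Hsp) rcM ger0_norm //.
by rewrite rc_ge0.
Qed.

End BSec.

Section Tail.
Variable R : realType.
Local Notation C := R[i].
Variable L : lmodType C.
Variable ip : L -> L -> C.
Hypothesis Hsp : is_scalar_product ip.
Variable e : nat -> L.
Hypothesis ON : forall i j, ip (e i) (e j) = (i == j)%:R.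
Variable B : L -> L.
Hypothesis Blin : linear_on_L0 e B.
Local Notation hn := (hnorm ip).
Local Notation PR := (Pr ip e).

Lemma rc1 : real_complex R 1 = 1.
Proof. exact: rmorph1. Qed.

Lemma tail (nK : forall K : R, exists f, [/\ inL0 e f, hn f = 1 & K < hn (B f)])
  N (d : R) : 0 < d ->
  exists ng : nat * L, [/\ (N < ng.1)%N, PR ng.1 ng.2 = ng.2,
     (forall j, (j < N)%N -> ip (e j) ng.2 = 0), hn ng.2 <= d & 1 < hn (B ng.2)].
Proof.
move=> d0.
set Q := \sum_(j < N) hn (B (e j)).
have [f [f0 f1 fB]] := nK (Q + d^-1).
have [n0 Hn0] := inL0_fix Hsp ON f0.
set n := maxn n0 N.+1.
have Hn : PR n f = f := Pr_mono Hsp ON Hn0 (leq_maxl _ _).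
set h := f - PR N f.
have Nn : (N <= n)%N by rewrite (leq_trans (leqnSn N)) // leq_maxr.
have hfix : PR n h = h by rewrite /h (PrB Hsp) Hn (PrPr Hsp ON).
have hL0 : inL0 e h := fixed_inL0 hfix.
have he : forall j, (j < N)%N -> ip (e j) h = 0.
  by move=> j jN; rewrite /h (ipBr Hsp) (ip_e_Pr Hsp ON) jN subrr.
have hh : hn h <= 1.
  have orth : ip (PR N f) h = 0.
    rewrite /Pr (ip_suml Hsp) big1 // => j _; rewrite (ipZl Hsp) he ?mulr0 //.
  have := pyth Hsp orth; rewrite /h addrC subrK => E.
  have : ip h h <= ip f f by rewrite E lerDr ip_ge0.
  rewrite -(hn_sqr Hsp h) -(hn_sqr Hsp f) f1 rc_le expr1n => H.
  by rewrite -(ler_pXn2r (_ : 0 < 2)%N) ?nnegrE ?hn_ge0 // expr1n.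
have QB : hn (B (PR N f)) <= Q.
  rewrite (B_Pr Hsp ON Blin); apply: le_trans (hn_sum_le Hsp _) _.
  rewrite /Q; apply: ler_sum => j _; apply: (hnZle Hsp).
  by have := CSn Hsp (e j) f; rewrite (hn_e ON) f1 mul1r rc1.
have hB : d^-1 < hn (B h).
  have Bf : B f = B (PR N f) + B h.
    have e1 : PR N f + h = f by rewrite /h addrC subrK.
    by rewrite -(BD Blin); [rewrite e1 | exact: inL0_Pr | exact: hL0].
  have := tri Hsp (B (PR N f)) (B h); rewrite -Bf => T.
  lra.
exists (n, real_complex R d *: h); split => /=.
- by rewrite leq_maxr.
- by rewrite (PrZ Hsp) hfix.
- by move=> j jN; rewrite (ipZr Hsp) he ?mulr0.
- rewrite (hn_rscale Hsp); last exact: ltW.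
  apply: ler_piMr => //; exact: ltW.
rewrite (BZ Blin) // (hn_rscale Hsp); last exact: ltW.
by rewrite -(mulfV (lt0r_neq0 d0)) ltr_pM2l.
Qed.

End Tail.

Section MainL.
Variable R : realType.
Local Notation C := R[i].
Variable L : lmodType C.
Variable ip : L -> L -> C.
Hypothesis Hsp : is_scalar_product ip.
Hypothesis Hcomp : forall u, hcauchy ip u -> exists l, hcvg ip u l.
Variable e : nat -> L.
Hypothesis ON : forall i j, ip (e i) (e j) = (i == j)%:R.
Variable B : L -> L.
Hypothesis Blin : linear_on_L0 e B.
Local Notation hn := (hnorm ip).
Local Notation PR := (Pr ip e).

Definition dk (k : nat) : R := ((2%:R : R) ^+ k)^-1.
Lemma dk_gt0 k : 0 < dk k.
Proof. by rewrite /dk invr_gt0 exprn_gt0 // ltr0n. Qed.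
Lemma dkS k : dk k = 2%:R * dk k.+1.
Proof.
rewrite /dk exprS invfM mulrA mulfV ?mul1r //.
by rewrite pnatr_eq0.
Qed.

Lemma rc_lt (r s : R) : (real_complex R r < real_complex R s) = (r < s).
Proof. by rewrite ltcE /= eqxx. Qed.

Lemma main_contra
  (HC : forall f eps, 0 < eps -> exists N, forall n m, (N <= n)%N -> (N <= m)%N ->
        hn (B (PR n f) - B (PR m f)) < eps) :
  exists K, forall f, inL0 e f -> hn f = 1 -> hn (B f) <= K.
Proof.
apply: NNPP => nK.
have big : forall K : R, exists f, [/\ inL0 e f, hn f = 1 & K < hn (B f)].
  move=> K; apply: NNPP => nf; apply: nK; exists K => f f0 f1.
  rewrite leNgt; apply/negP => lt; apply: nf; by exists f.
have pk : forall N k, {ng : nat * L | [/\ (N < ng.1)%N, PR ng.1 ng.2 = ng.2,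
     (forall j, (j < N)%N -> ip (e j) ng.2 = 0), hn ng.2 <= dk k & 1 < hn (B ng.2)]}.
  move=> N k; apply: constructive_indefinite_description.
  exact: (tail Hsp ON Blin big N (dk_gt0 k)).
pose st := fix st k := match k with
  | 0%N => (0%N, 0 : L)
  | k'.+1 => ((sval (pk (st k').1 k')).1, (st k').2 + (sval (pk (st k').1 k')).2)
  end.
pose NN k := (st k).1; pose G k := (st k).2.
pose g k := (sval (pk (NN k) k)).2.
have GS k : G k.+1 = G k + g k by [].
have P k : [/\ (NN k < NN k.+1)%N, PR (NN k.+1) (g k) = g k,
     (forall j, (j < NN k)%N -> ip (e j) (g k) = 0), hn (g k) <= dk k & 1 < hn (B (g k))].
  exact: (svalP (pk (NN k) k)).
have Gfix k : PR (NN k) (G k) = G k.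
  elim: k => [|k IH]; first by rewrite /Pr big_ord0.
  have [P1 P2 _ _ _] := P k.
  by rewrite GS (PrD Hsp) (Pr_mono Hsp ON IH (ltnW P1)) P2.
have NNk k : (k <= NN k)%N.
  elim: k => [|k IH] //; have [P1 _ _ _ _] := P k; exact: leq_ltn_trans IH P1.
have NNmono k t : (NN k <= NN (k + t)%N)%N.
  elim: t => [|t IH]; first by rewrite addn0.
  have [P1 _ _ _ _] := P (k + t)%N; rewrite addnS; exact: leq_trans IH (ltnW P1).
have Gcau k t : hn (G (k + t)%N - G k) <= 2%:R * dk k - 2%:R * dk (k + t)%N.
  elim: t => [|t IH]; first by rewrite !addn0 subrr (hn0 Hsp) subrr.
  have [_ _ _ P4 _] := P (k + t)%N.
  rewrite addnS GS addrAC; apply: le_trans (tri Hsp _ _) _.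
  have := dkS (k + t)%N; lra.
have Gcau' k n : (k <= n)%N -> hn (G n - G k) <= 2%:R * dk k.
  move=> kn; rewrite -(subnKC kn); apply: le_trans (Gcau _ _) _.
  have := dk_gt0 (k + (n - k))%N; lra.
have GC : hcauchy ip G.
  move=> eps eps0.
  set k0 := Num.bound (4%:R / eps).
  have hb : 4%:R / eps < k0%:R by apply: archi_boundP; rewrite divr_ge0 ?ltW.
  have hk : (k0%:R : R) < 2%:R ^+ k0 by rewrite -natrX ltr_nat ltn_expl.
  have dd : dk k0 * 2%:R ^+ k0 = 1 by rewrite /dk mulVf // expf_neq0 // pnatr_eq0.
  have d4 : 4%:R * dk k0 < eps.
    have hx : 4%:R < eps * 2%:R ^+ k0.
      have h4 : 4%:R / eps * eps = 4%:R by rewrite mulfVK // gt_eqF.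
      by have := lt_trans hb hk; rewrite -(ltr_pM2r eps0) h4 mulrC.
    have hp : 0 < (2%:R : R) ^+ k0 by rewrite exprn_gt0 // ltr0n.
    rewrite -(ltr_pM2r hp) -mulrA dd mulr1; lra.
  exists k0 => n m kn km.
  have := Gcau' _ _ kn; have := Gcau' _ _ km; rewrite (hnB Hsp (G m)) => h1 h2.
  have := tri Hsp (G n - G k0) (G k0 - G m).
  rewrite addrA subrK => h3; lra.
have [f Hf] := Hcomp GC.
have stab k t j : (j < NN k)%N -> ip (e j) (G (k + t)%N) = ip (e j) (G k).
  move=> jk; elim: t => [|t IH]; first by rewrite addn0.
  have [_ _ P3 _ _] := P (k + t)%N.
  by rewrite addnS GS (ipDr Hsp) IH P3 ?addr0 // (leq_trans jk (NNmono k t)).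
have coef k j : (j < NN k)%N -> ip (e j) f = ip (e j) (G k).
  move=> jk; apply/eqP; rewrite -subr_eq0; apply/negPn/negP => z0.
  set z := _ - _ in z0.
  have rz : real_complex R (complex.Re `|z|) = `|z| by apply: RRe_real; exact: normr_real.
  have r0 : 0 < complex.Re `|z| by rewrite -(rc_lt 0) rmorph0 rz normr_gt0.
  have [N0 HN0] := Hf _ r0.
  set n := maxn N0 k.
  have zE : z = ip (e j) (f - G n).
    rewrite (ipBr Hsp) /n -(subnKC (leq_maxr N0 k)) stab //.
  have := CSn Hsp (e j) (f - G n); rewrite -zE (hn_e ON) mul1r (hnB Hsp) => H1.
  have := HN0 n (leq_maxl _ _); rewrite -(rc_lt (hn _)) rz => H2.
  by have := lt_le_trans H2 H1; rewrite ltxx.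
have PrNf k : PR (NN k) f = G k.
  rewrite -{1}(Gfix k) /Pr; apply: eq_bigr => j _; by rewrite (coef k).
have [N0 HN0] := HC f 1 ltr01.
have [P1 P2 _ _ P5] := P N0.
have := HN0 (NN N0.+1) (NN N0) (leq_trans (NNk N0) (ltnW P1)) (NNk N0).
rewrite !PrNf GS (BD Blin).
- by rewrite addrAC subrr add0r => h; have := lt_trans h P5; rewrite ltxx.
- exact: (fixed_inL0 (Gfix N0)).
- exact: (fixed_inL0 P2).
Qed.

End MainL.

Section FockSide.
Variable R : realType.
Local Notation C := R[i].
Variables (L : lmodType C) (ipL : L -> L -> C) (cj : L -> L).
Variables (F : lmodType C) (ipF : F -> F -> C).
Variables (D : F -> Prop) (a ad : L -> F -> F) (Om : F).
Hypothesis HspL : is_scalar_product ipL.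
Hypothesis HspF : is_scalar_product ipF.
Hypothesis cjK : forall f, cj (cj f) = f.
Hypothesis HF : fock_representation ipL cj ipF D a ad Om.

Lemma DOm : D Om.
Proof. by case: HF => _ [H _]. Qed.
Lemma Dinv f x : D x -> D (ad f x).
Proof. by case: HF => _ [_ [H _]] Dx; case: (H f x Dx). Qed.
Lemma D0 : D 0.
Proof.
case: HF => Dlin _; have := Dlin (-1) Om Om DOm DOm.
by rewrite scaleN1r addNr.
Qed.
Lemma adx g c x y : D x -> D y -> ad g (c *: x + y) = c *: ad g x + ad g y.
Proof. by case: HF => _ [_ [_ [_ [H _]]]] Dx Dy; case: (H g c x y Dx Dy). Qed.
Lemma adf c f g : ad (c *: f + g) Om = c *: ad f Om + ad g Om.
Proof. by case: HF => _ [_ [_ [_ [_ [H _]]]]]; case: (H c f g Om DOm). Qed.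
Lemma ad_x0 g : ad g 0 = 0.
Proof.
have := adx g (-1) DOm DOm; rewrite scaleN1r !addNr => ->.
by rewrite scaleN1r addNr.
Qed.
Lemma ad_xZ g c : ad g (c *: Om) = c *: ad g Om.
Proof. by have := adx g c DOm D0; rewrite !addr0 ad_x0 addr0. Qed.
Lemma ad_f0 : ad 0 Om = 0.
Proof. by have := adf (-1) 0 0; rewrite scaler0 addr0 scaleN1r addNr. Qed.
Lemma ad_fB u v : ad (u - v) Om = ad u Om - ad v Om.
Proof. by rewrite addrC -scaleN1r adf scaleN1r addrC. Qed.
Lemma ad_sum n (c : 'I_n -> C) (v : 'I_n -> L) :
  ad (\sum_(i < n) c i *: v i) Om = \sum_(i < n) c i *: ad (v i) Om.
Proof.
elim/big_rec2: _ => [|i x y _ IH]; first exact: ad_f0.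
by rewrite adf IH.
Qed.
Lemma a_ad g f : a (cj g) (ad f Om) = ipL g f *: Om.
Proof.
case: HF => _ [_ [_ [_ [_ [_ [H [_ [_ [aOm _]]]]]]]]].
have [_ [_ E]] := H (cj g) f Om DOm.
by move: E; rewrite aOm ad_x0 subr0 cjK.
Qed.
Lemma ipF_ad w : ipF (ad w Om) (ad w Om) = ipL w w.
Proof.
case: HF => _ [_ [_ [_ [_ [_ [_ [adj [OmOm _]]]]]]]].
have := adj (cj w) (ad w Om) Om (Dinv w DOm) DOm; rewrite cjK => <-.
rewrite a_ad (ipZl HspF) OmOm mulr1.
exact: (conj_Creal (ger0_real (ip_ge0 HspL w))).
Qed.
Lemma hnF w : hnorm ipF (ad w Om) = hnorm ipL w.
Proof. by rewrite /hnorm ipF_ad. Qed.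

Lemma npart1 f : npart ipF ad Om 1 (ad f Om).
Proof.
move=> eps eps0; exists (ad f Om); split; last by rewrite subrr (hn0 HspF).
exists 1%N, (fun _ => 1), (fun _ => ad f Om); split.
  by move=> _; exists [:: f].
by rewrite big_ord1 scale1r.
Qed.

Variable e : nat -> L.
Hypothesis ON : forall i j, ipL (e i) (e j) = (i == j)%:R.
Variable B : L -> L.
Hypothesis Blin : linear_on_L0 e B.

Lemma dG f M : dGammaM cj a ad e B M (ad f Om) = ad (B (Pr ipL e M f)) Om.
Proof.
rewrite /dGammaM (B_Pr HspL ON Blin) ad_sum; apply: eq_bigr => j _.
by rewrite a_ad ad_xZ.
Qed.

End FockSide.

Theorem proposition5p4 (R : realType)
  (L : lmodType R[i]) (ipL : L -> L -> R[i]) (cj : L -> L)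
  (F : lmodType R[i]) (ipF : F -> F -> R[i])
  (D : F -> Prop) (a ad : L -> F -> F) (Om : F)
  (e : nat -> L) (B : L -> L) :
  is_hilbert ipL -> separable ipL -> is_conjugation ipL cj ->
  is_hilbert ipF ->
  fock_representation ipL cj ipF D a ad Om ->
  complete_orthonormal ipL e ->
  linear_on_L0 e B ->
  (forall x, npart ipF ad Om 1 x ->
     exists y, hcvg ipF (fun M => dGammaM cj a ad e B M x) y) ->
  exists K : R, forall f, inL0 e f -> hnorm ipL f = 1 -> hnorm ipL (B f) <= K.
Proof.
move=> [HspL HcL] _ [_ cjK _] [HspF _] HF [ON _] Blin Hconv.
apply: (main_contra HspL HcL ON Blin) => f eps eps0.
have [y Hy] := Hconv _ (npart1 ad Om HspF f).
have e2 : 0 < eps / 2%:R by rewrite divr_gt0 // ltr0n.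
have [N HN] := Hy _ e2.
exists N => n m hn hm.
have h1 := HN n hn; have h2 := HN m hm.
rewrite /= !(dG HspL cjK HF ON Blin) in h1 h2.
rewrite -(hnF HspL HspF cjK HF) (ad_fB HF).
have := tri HspF (ad (B (Pr ipL e n f)) Om - y) (y - ad (B (Pr ipL e m f)) Om).
rewrite addrA subrK (hnB HspF y) => h3; lra.
Qed.
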